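(* In the setting of the incomplete arithmetic HRE matrix $A_k$ (with $1\le k<n$), if $k=1$, or if $s_{\mathrm{MAX}}=s_{\mathrm{MIN}}$ and $\overline{\mathit{CI}}(C_k)<\frac{n-k}{k-1}$, then $A_k$ is invertible.
   Context: $C_k=[c_{ij}]_{i,j=1}^k$ is the upper-left $k\times k$ submatrix of an incomplete $n\times n$ pairwise comparison matrix (entries positive or unknown $?$, known entries reciprocal with unit diagonal). $s_i$ is the number of missing entries in row $i$ of $C_k$, $s_{\mathrm{MAX}}=\max_i s_i$, $s_{\mathrm{MIN}}=\min_i s_i$. $D_k=[d_{ij}]$ with $d_{ij}=c_{ij}$ if known, $0$ if $c_{ij}=?$. $A_k$ has diagonal entries $1$ and off-diagonal entries $-\frac{d_{ij}}{n-s_i-1}$. Harker's index: $\overline{\mathit{CI}}(C_k)=\frac{\rho(H)-k}{k-1}$ where $H$ has $h_{ii}=1+s_i$, $h_{ij}=0$ if $c_{ij}=?$, $h_{ij}=c_{ij}$ otherwise, and $\rho$ is the spectral radius. *)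

(* Defs.v *)
From HB Require Import structures.
From mathcomp Require Import all_boot all_order all_algebra.
From mathcomp Require Import complex.
Set Implicit Arguments. Unset Strict Implicit. Unset Printing Implicit Defensive.
Import Order.TTheory GRing.Theory Num.Theory.
Local Open Scope ring_scope.

Section Defs.
Variable R : rcfType.

(* An incomplete pairwise comparison matrix: [Some x] is a known entry x,
   [None] is a missing entry "?". *)
Definition incomplete_pcm (n : nat) (C : 'M[option R]_n) : Prop :=
  (forall i, C i i = Some 1) /\
  (forall i j x, C i j = Some x -> 0 < x /\ C j i = Some x^-1) /\
  (forall i j, C i j = None -> C j i = None).

Definition upper_left (n k : nat) (hk : (k <= n)%N) (C : 'M[option R]_n)
  : 'M[option R]_k :=
  \matrix_(i < k, j < k) C (widen_ord hk i) (widen_ord hk j).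

Definition nmiss (k : nat) (C : 'M[option R]_k) (i : 'I_k) : nat :=
  #|[set j | C i j == None]|.

Definition s_max (k : nat) (C : 'M[option R]_k) : nat :=
  \max_(i < k) nmiss C i.

(* the neutral element k is harmless: every s_i <= k - 1 < k *)
Definition s_min (k : nat) (C : 'M[option R]_k) : nat :=
  \big[minn/k]_(i < k) nmiss C i.

Definition dmx (k : nat) (C : 'M[option R]_k) : 'M[R]_k :=
  \matrix_(i, j) match C i j with Some x => x | None => 0 end.

Definition A_mx (n k : nat) (C : 'M[option R]_k) : 'M[R]_k :=
  \matrix_(i, j) if i == j then 1
                 else - dmx C i j / (n%:R - (nmiss C i)%:R - 1).

Definition harker_mx (k : nat) (C : 'M[option R]_k) : 'M[R]_k :=
  \matrix_(i, j) if i == j then 1 + (nmiss C i)%:R else dmx C i j.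

(* complex eigenvalues (with multiplicity) of a real square matrix *)
Definition eigenvalues_C (k : nat) (M : 'M[R]_k) : seq R[i] :=
  sval (closed_field_poly_normal
          (char_poly (map_mx (fun x : R => (x%:C)%C) M))).

Definition spectral_radius (k : nat) (M : 'M[R]_k) : R :=
  \big[Num.max/0]_(z <- eigenvalues_C M) Normc.normc z.

Definition harker_CI (k : nat) (C : 'M[option R]_k) : R :=
  (spectral_radius (harker_mx C) - k%:R) / (k%:R - 1).

End Defs.

(* Main.v *)
Require Import Defs.
From HB Require Import structures.
From mathcomp Require Import all_boot all_order all_algebra.
From mathcomp Require Import complex.
From mathcomp Require Import ring.
Import Order.TTheory GRing.Theory Num.Theory.
Local Open Scope ring_scope.

Lemma root_char_det {F : fieldType} {m} (M : 'M[F]_m) a :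
  \det (a%:M - M) = 0 -> root (char_poly M) a.
Proof.
move=> hd; rewrite -eigenvalue_root_char; apply/eigenvalueP.
have /det0P [v vnz hv] : \det (a%:M - M) == 0 by rewrite hd.
exists v => //; apply/eqP; rewrite -mul_mx_scalar eq_sym -subr_eq0 -mulmxBr hv //.
Qed.

Lemma key (R : rcfType) k (H : 'M[R]_k) (x : R) : 0 <= x ->
  \det (x%:M - H) = 0 -> x <= spectral_radius H.
Proof.
move=> x0 hd.
have hr := @root_char_det _ _ H x hd.
have hc : root (char_poly (map_mx (real_complex R) H)) (x%:C)%C.
  by rewrite -map_char_poly rmorph_root.
rewrite /spectral_radius /eigenvalues_C.
case: closed_field_poly_normal => r /= Hr.
move: hc; rewrite Hr (monicP (char_poly_monic _)) scale1r root_prod_XsubC => hin.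
have -> : x = Normc.normc (x%:C)%C.
  by rewrite /= expr0n /= addr0 sqrtr_sqr ger0_norm.
exact: (le_bigmax_seq _ _ xpredT _ hin).
Qed.


Theorem mainTheorem7 (R : rcfType) (n k : nat) (C : 'M[option R]_n)
  (hC : incomplete_pcm C) (hk1 : (1 <= k)%N) (hkn : (k < n)%N) :
  let Ck := upper_left (ltnW hkn) C in
  k = 1%N \/
  (s_max Ck = s_min Ck /\ harker_CI Ck < (n%:R - k%:R) / (k%:R - 1)) ->
  A_mx n Ck \in unitmx.
Proof.
move=> Ck.
case: (eqVneq k 1%N) => [hk _|hk].
  move: hkn Ck hk1; rewrite hk => hkn Ck _.
  by rewrite unitmxE unitfE det_mx11 mxE eqxx oner_neq0.
case=> [hk1eq|[hs hci]]; first by rewrite hk1eq eqxx in hk.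
have hk2 : (1 < k)%N by rewrite ltn_neqAle eq_sym hk hk1.
set s := s_max Ck.
have hsi : forall i, nmiss Ck i = s.
  move=> i; apply/eqP; rewrite eqn_leq; apply/andP; split.
    exact: (leq_bigmax i).
  rewrite /s hs /s_min.
  have : i \in index_enum 'I_k by rewrite mem_index_enum.
  elim: (index_enum 'I_k) => [//|a r IH]; rewrite inE big_cons.
  case/orP => [/eqP <-|/IH h]; first exact: geq_minl.
  exact: leq_trans (geq_minr _ _) h.
have hsk : (s < k)%N.
  have [i0 _] : exists i : 'I_k, true by exists (Ordinal hk1).
  rewrite -(hsi i0) /nmiss.
  have hsub : [set j | Ck i0 j == None] \subset [set~ i0].
    apply/subsetP => j; rewrite !inE; apply: contraTneq => ->.
    by rewrite /Ck /upper_left mxE (proj1 hC).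
  by rewrite (leq_ltn_trans (subset_leq_card hsub)) // cardsC1 card_ord prednK //.
have hc : 0 < n%:R - s%:R - 1 :> R.
  rewrite -addrA -opprD subr_gt0 -[1]/(1%:R) -natrD ltr_nat addn1.
  exact: (leq_ltn_trans hsk hkn).
have hA : (n%:R - s%:R - 1) *: A_mx n Ck = n%:R%:M - harker_mx Ck.
  apply/matrixP => i j; rewrite !mxE hsi.
  case: (i =P j) => hij /=.
    by rewrite mulr1 mulr1n; ring.
  rewrite mulr0n sub0r mulrC -mulrA mulVf ?mulr1 //.
  exact: lt0r_neq0.
rewrite unitmxE unitfE; apply/eqP => hd.
have hd2 : \det (n%:R%:M - harker_mx Ck) = 0 by rewrite -hA detZ hd mulr0.
have := @key R k (harker_mx Ck) n%:R (ler0n _ _) hd2.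
have hk0 : 0 < k%:R - 1 :> R by rewrite subr_gt0 -[1]/(1%:R) ltr_nat.
rewrite /harker_CI ltr_pM2r ?invr_gt0 // in hci.
move: hci; rewrite ltrBlDr subrK => hci.
by rewrite leNgt hci.
Qed.
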